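(* Let $\mathbf{u}_j\in c_0$, $j\in\mathbb{N}_m$, $\mathcal{L}(\mathbf{x}):=[\langle\mathbf{u}_j,\mathbf{x}\rangle:j\in\mathbb{N}_m]$ for $\mathbf{x}\in\ell_1(\mathbb{N})$, and $\mathcal{L}^*(\mathbf{c}):=\sum_{j\in\mathbb{N}_m}c_j\mathbf{u}_j$. Let $\mathbf{y}_0\in\mathbb{R}^m$, let $\mathcal{Q}_{\mathbf{y}_0}:\mathbb{R}^m\to\mathbb{R}_+$ be convex, and $\lambda>0$. Then $\mathbf{x}_0\in\ell_1(\mathbb{N})$ is a solution of $$\inf\{\mathcal{Q}_{\mathbf{y}_0}(\mathcal{L}(\mathbf{x}))+\lambda\|\mathbf{x}\|_1:\mathbf{x}\in\ell_1(\mathbb{N})\}$$ if and only if there exists $\hat{\mathbf{c}}\in\mathbb{R}^m$ such that $$\hat{\mathbf{c}}=\mathrm{prox}_{\mathcal{Q}_{\mathbf{y}_0}^*}(\hat{\mathbf{c}}+\mathcal{L}(\mathbf{x}_0))\quad\text{and}\quad \mathbf{x}_0=\mathrm{prox}_{\|\cdot\|_1,\ell_2(\mathbb{N}),\mathcal{T}_0}\Big(\mathbf{x}_0-\frac1\lambda\mathcal{S}\mathcal{L}^*(\hat{\mathbf{c}})\Big).$$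
   Context: $\mathbb{R}_+:=[0,+\infty)$; $\mathbb{N}_m:=\{1,\dots,m\}$; $c_0$ is the space of real sequences tending to $0$, $\|\mathbf{u}\|_\infty=\sup_j|u_j|$; $\langle\mathbf{u},\mathbf{x}\rangle:=\sum_ju_jx_j$. $\mathcal{Q}_{\mathbf{y}_0}^*(\mathbf{c}):=\sup\{\langle\mathbf{a},\mathbf{c}\rangle_{\mathbb{R}^m}-\mathcal{Q}_{\mathbf{y}_0}(\mathbf{a}):\mathbf{a}\in\mathbb{R}^m\}$ is the convex conjugate. For a convex $\psi:\mathbb{R}^m\to\mathbb{R}\cup\{+\infty\}$, $\mathrm{prox}_\psi(\mathbf{a}):=\arg\min\{\frac12\|\mathbf{a}-\mathbf{c}\|_{\mathbb{R}^m}^2+\psi(\mathbf{c}):\mathbf{c}\in\mathbb{R}^m\}$. $\mathcal{T}_0:\ell_1(\mathbb{N})\to\ell_2(\mathbb{N})$ is the inclusion and $\mathrm{prox}_{\|\cdot\|_1,\ell_2(\mathbb{N}),\mathcal{T}_0}(\mathbf{x}):=\arg\min\{\frac12\|\mathbf{x}-\mathbf{z}\|_2^2+\|\mathbf{z}\|_1:\mathbf{z}\in\ell_1(\mathbb{N})\}=(\max\{|x_j|-1,0\}\mathrm{sign}(x_j):j\in\mathbb{N})$. For $\mathbf{u}\in c_0$, $\mathbb{N}(\mathbf{u}):=\{j:|u_j|=\|\mathbf{u}\|_\infty\}$ and the truncation $\mathcal{S}(\mathbf{u})$ is the sequence equal to $u_j$ for $j\in\mathbb{N}(\mathbf{u})$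 and $0$ otherwise. *)

(* Defs.v *)
From HB Require Import structures.
From mathcomp Require Import all_boot all_order all_algebra.
From mathcomp Require Import all_classical all_reals all_analysis.
Set Implicit Arguments. Unset Strict Implicit. Unset Printing Implicit Defensive.
Import Order.TTheory GRing.Theory Num.Theory.
Import numFieldNormedType.Exports.
Local Open Scope classical_set_scope.
Local Open Scope ring_scope.

Section Defs.
Variable R : realType.

Definition in_c0 (u : R^nat) : Prop := u @ \oo --> (0 : R).

Definition in_l1 (x : R^nat) : Prop := cvgn (series (fun k => `|x k|)).

Definition l1norm (x : R^nat) : R := limn (series (fun k => `|x k|)).

Definition seq_inner (u x : R^nat) : R := limn (series (fun k => u k * x k)).

Definition Lop (m : nat) (us : 'I_m -> R^nat) (x : R^nat) : 'I_m -> R :=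
  fun j => seq_inner (us j) x.

Definition Ladj (m : nat) (us : 'I_m -> R^nat) (c : 'I_m -> R) : R^nat :=
  fun k => \sum_(j < m) c j * us j k.

Definition vinner (m : nat) (a c : 'I_m -> R) : R := \sum_(j < m) a j * c j.
Definition vnorm2 (m : nat) (a : 'I_m -> R) : R := \sum_(j < m) a j ^+ 2.

Definition convex_fun (m : nat) (Q : ('I_m -> R) -> R) : Prop :=
  forall (a b : 'I_m -> R) (t : R), 0 <= t -> t <= 1 ->
    Q (fun j => t * a j + (1 - t) * b j) <= t * Q a + (1 - t) * Q b.

Definition conjugate (m : nat) (Q : ('I_m -> R) -> R) (c : 'I_m -> R) : \bar R :=
  ereal_sup (range (fun a : 'I_m -> R => (vinner a c - Q a)%:E)).

Definition is_prox (m : nat) (psi : ('I_m -> R) -> \bar R) (a p : 'I_m -> R) : Prop :=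
  forall c : 'I_m -> R,
    ((2^-1 * vnorm2 (fun j => a j - p j))%:E + psi p <=
     (2^-1 * vnorm2 (fun j => a j - c j))%:E + psi c)%E.

Definition supnorm (u : R^nat) : R := sup (range (fun j => `|u j|)).

(* truncation S(u): keep u_j for j in N(u) = {j : |u_j| = ||u||_inf}, 0 otherwise *)
Definition trunc (u : R^nat) : R^nat :=
  fun j => if `|u j| == supnorm u then u j else 0.

(* prox_{||.||_1, l_2(N), T_0}(x) = soft thresholding at level 1 *)
Definition prox_l1 (x : R^nat) : R^nat :=
  fun j => Num.max (`|x j| - 1) 0 * Num.sg (x j).

Definition is_solution (m : nat) (us : 'I_m -> R^nat) (Q : ('I_m -> R) -> R)
  (lam : R) (x0 : R^nat) : Prop :=
  in_l1 x0 /\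
  forall x : R^nat, in_l1 x ->
    Q (Lop us x0) + lam * l1norm x0 <= Q (Lop us x) + lam * l1norm x.

End Defs.

(* Main.v *)
Require Import Defs.
From HB Require Import structures.
From mathcomp Require Import all_boot all_order all_algebra.
From mathcomp Require Import all_classical all_reals all_analysis.
From mathcomp Require Import ring lra.
Import Order.TTheory GRing.Theory Num.Theory.
Import numFieldNormedType.Exports.
Local Open Scope ring_scope.

Module Helpers.
Set Implicit Arguments. Unset Strict Implicit. Unset Printing Implicit Defensive.
Local Open Scope classical_set_scope.
Section Sub.
Variable R : realType.

Lemma div_le (a b s1 s2 : R) : 0 < s1 -> 0 < s2 -> a * s2 <= b * s1 -> a / s1 <= b / s2.
Proof. by move=> h1 h2; rewrite ler_pdivrMr // mulrAC ler_pdivlMr. Qed.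

Lemma vinner_lin (m : nat) (c z1 z2 : 'I_m -> R) t s :
  vinner c (fun j => t * z1 j + s * z2 j) = t * vinner c z1 + s * vinner c z2.
Proof.
rewrite /vinner !mulr_sumr -big_split; apply: eq_bigr => j _ /=; ring.
Qed.

Variables (m : nat) (X : Type) (P : X -> Prop) (mix : R -> X -> X -> X)
  (Phi : ('I_m -> R) -> X -> R).
Hypothesis hmix : forall t x1 x2, 0 <= t -> t <= 1 -> P x1 -> P x2 -> P (mix t x1 x2).
Hypothesis hconv : forall t z1 z2 x1 x2, 0 <= t -> t <= 1 -> P x1 -> P x2 ->
  Phi (fun j => t * z1 j + (1 - t) * z2 j) (mix t x1 x2) <= t * Phi z1 x1 + (1 - t) * Phi z2 x2.
Hypothesis h0 : forall x, P x -> 0 <= Phi (fun _ => 0) x.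
Hypothesis hne : exists x, P x.

Definition supp k (z : 'I_m -> R) := forall j : 'I_m, (k <= j)%N -> z j = 0.

Lemma ext_step k (hk : (k < m)%N) c : supp k c ->
  (forall z x, supp k z -> P x -> vinner c z <= Phi z x) ->
  exists c', supp k.+1 c' /\ forall z x, supp k.+1 z -> P x -> vinner c' z <= Phi z x.
Proof.
move=> sc IH.
pose e := Ordinal hk.
pose sh (z : 'I_m -> R) (s : R) := fun j => z j + (if j == e then s else 0).
have key : forall z1 x1 s1 z2 x2 s2, supp k z1 -> P x1 -> 0 < s1 ->
    supp k z2 -> P x2 -> 0 < s2 ->
    (vinner c z1 - Phi (sh z1 (-s1)) x1) / s1 <= (Phi (sh z2 s2) x2 - vinner c z2) / s2.
  move=> z1 x1 s1 z2 x2 s2 hz1 hx1 hs1 hz2 hx2 hs2.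
  pose t := s2 / (s1 + s2).
  have hs12 : 0 < s1 + s2 by lra.
  have ht : t * (s1 + s2) = s2 by rewrite /t mulrAC -mulrA divff ?mulr1 // gt_eqF.
  have t0 : 0 <= t by rewrite /t divr_ge0 // ltW.
  have t1 : t <= 1 by rewrite /t ler_pdivrMr // mul1r; lra.
  have hz : supp k (fun j => t * z1 j + (1 - t) * z2 j).
    by move=> j hj; rewrite hz1 // hz2 //; ring.
  have eqf : (fun j => t * sh z1 (-s1) j + (1 - t) * sh z2 s2 j) =
             (fun j => t * z1 j + (1 - t) * z2 j).
    apply: funext => j; rewrite /sh; case: (j == e); last by ring.
    nra.
  have := hconv (sh z1 (-s1)) (sh z2 s2) t0 t1 hx1 hx2; rewrite eqf => hc.
  have := IH _ (mix t x1 x2) hz (hmix t0 t1 hx1 hx2); rewrite vinner_lin => hi.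
  have H : 0 <= (s1 + s2) * (t * (Phi (sh z1 (-s1)) x1 - vinner c z1) +
                 (1 - t) * (Phi (sh z2 s2) x2 - vinner c z2)).
    by apply: mulr_ge0; [lra|lra].
  have E1 : (s1 + s2) * (t * (Phi (sh z1 (-s1)) x1 - vinner c z1) +
                 (1 - t) * (Phi (sh z2 s2) x2 - vinner c z2)) =
    (t * (s1 + s2)) * (Phi (sh z1 (-s1)) x1 - vinner c z1) +
    ((s1 + s2) - t * (s1 + s2)) * (Phi (sh z2 s2) x2 - vinner c z2) by ring.
  rewrite E1 ht in H.
  apply: div_le => //; nra.
pose E := [set r | exists z x s, [/\ supp k z, P x, 0 < s &
            r = (vinner c z - Phi (sh z (-s)) x) / s]].
have [x1 Px1] := hne.
have z0 : supp k (fun _ => 0) by [].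
have Ene : E !=set0 by exists ((vinner c (fun _ => 0) - Phi (sh (fun _ => 0) (-1)) x1) / 1);
  exists (fun _ => 0), x1, 1.
have Eub : ubound E ((Phi (sh (fun _ => 0) 1) x1 - vinner c (fun _ => 0)) / 1).
  by move=> r [z [x [s [hz hx hs ->]]]]; apply: key.
have Ehub : has_ubound E by exists ((Phi (sh (fun _ => 0) 1) x1 - vinner c (fun _ => 0)) / 1).
pose alpha := sup E.
exists (fun j => if j == e then alpha else c j); split.
  move=> j hj; have -> : (j == e) = false.
    by apply/negbTE; apply/eqP => hje; move: hj; rewrite hje /= ltnn.
  by apply: sc; apply: ltnW.
move=> w x hw Px.
pose s := w e.
pose z := fun j => if j == e then 0 else w j.
have hz : supp k z.
  move=> j hj; rewrite /z; case: eqP => // /eqP hje; apply: hw.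
  by rewrite ltn_neqAle hj andbT; apply/eqP => hkj; move: hje; apply/negP/negPn/eqP/val_inj.
have hw' : w = sh z s.
  apply: funext => j; rewrite /sh /z; case: eqP => [->|]; [by rewrite add0r|by rewrite addr0].
have hv : vinner (fun j => if j == e then alpha else c j) w = vinner c z + alpha * s.
  suff : vinner (fun j => if j == e then alpha else c j) w - vinner c z = alpha * s.
    by move=> h; rewrite -h; ring.
  rewrite /vinner -sumrB (bigD1 e) //= big1 => [|j /negbTE hj]; last by rewrite /z hj subrr.
  by rewrite /z eqxx mulr0 subr0 addr0.
rewrite hv.
have [sneg|spos|s0] := ltrgtP s 0.
- have hin : E ((vinner c z - Phi (sh z (- - s)) x) / (- s)).
    by exists z, x, (- s); split => //; rewrite oppr_gt0.
  have := ub_le_sup Ehub hin; rewrite -/alpha opprK -hw' => hle.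
  have : vinner c z - Phi w x <= alpha * (- s) by rewrite -ler_pdivrMr ?oppr_gt0.
  lra.
- have : alpha <= (Phi (sh z s) x - vinner c z) / s.
    apply: ge_sup => // r [z' [x' [s' [hz' hx' hs' ->]]]]; exact: key.
  rewrite -hw' ler_pdivlMr // => h; lra.
- rewrite s0 mulr0 addr0.
  have zw : z = w by rewrite hw' /sh s0; apply: funext => j; case: (j == e); rewrite addr0.
  by rewrite -zw; apply: IH.
Qed.
Lemma subgrad_exists : exists c, forall z x, P x -> vinner c z <= Phi z x.
Proof.
suff : forall k, (k <= m)%N -> exists c, supp k c /\
    forall z x, supp k z -> P x -> vinner c z <= Phi z x.
  move/(_ m (leqnn m)) => [c [_ hc]]; exists c => z x Px; apply: hc => // j hj.
  by have := ltn_ord j; rewrite ltnNge hj.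
elim=> [_|k IH hk].
  exists (fun _ => 0); split => // z x hz Px.
  have -> : z = (fun _ => 0) by apply: funext => j; apply: hz.
  by rewrite /vinner big1 => [|j _]; [exact: h0|rewrite mul0r].
have [c [sc hc]] := IH (ltnW hk).
have := @ext_step k hk c sc hc. exact.
Qed.
End Sub.
Section Ser.
Variable R : realType.

Definition bnd (u : R^nat) := exists B : R, 0 <= B /\ forall n, `|u n| <= B.

Lemma hsR : hausdorff_space R. Proof. exact: Rhausdorff. Qed.

Lemma series_lin (a b : R^nat) (s t la lb : R) :
  series a @ \oo --> la -> series b @ \oo --> lb ->
  series (fun k => s * a k + t * b k) @ \oo --> s * la + t * lb.
Proof.
move=> ha hb.
have -> : series (fun k => s * a k + t * b k) = (fun n => s * series a n + t * series b n).
  by apply: funext => n; rewrite /series /= big_split /= -!mulr_sumr.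
by apply: cvgD; apply: cvgMl_tmp.
Qed.

Lemma cvg_sum_list (I : Type) (r : seq I) (P : pred I) (f : I -> R^nat) (l : I -> R) :
  (forall i, f i @ \oo --> l i) ->
  (fun n => \sum_(i <- r | P i) f i n) @ \oo --> \sum_(i <- r | P i) l i.
Proof.
move=> h; elim: r => [|i r IH].
  have -> : (fun n => \sum_(i <- [::] | P i) f i n) = (fun _ => 0).
    by apply: funext => n; rewrite big_nil.
  by rewrite big_nil; exact: cvg_cst.
have -> : (fun n => \sum_(j <- i :: r | P j) f j n) =
    (fun n => (if P i then f i n else 0) + \sum_(j <- r | P j) f j n).
  by apply: funext => n; rewrite big_cons; case: (P i); rewrite ?add0r.
rewrite big_cons; case: (P i).
  by apply: cvgD.
rewrite -[X in _ --> X]add0r; apply: cvgD => //; exact: cvg_cst.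
Qed.

Lemma c0_bnd (u : R^nat) : in_c0 u -> bnd u.
Proof.
move=> hu; have [N _ hN] := cvgr0_norm_lt _ hu _ ltr01.
exists (1 + \sum_(k < N) `|u k|); split; first by rewrite addr_ge0 // sumr_ge0.
move=> n; case: (ltnP n N) => hn.
  rewrite (bigD1 (Ordinal hn)) //=.
  have hr : 0 <= \sum_(k < N | k != Ordinal hn) `|u k| by apply: sumr_ge0.
  lra.
have h := hN n hn; rewrite /= in h.
have hr : 0 <= \sum_(k < N) `|u k| by apply: sumr_ge0.
lra.
Qed.

Lemma abs_cvg (u x : R^nat) : bnd u -> in_l1 x -> cvgn (series (fun k => u k * x k)).
Proof.
move=> [B [B0 hB]] hx; apply: normed_cvg.
apply: (@series_le_cvg _ _ (fun k => B * `|x k| + 0 * `|x k|)).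
- by move=> n; rewrite normr_ge0.
- by move=> n; rewrite mul0r addr0 mulr_ge0.
- by move=> n; rewrite mul0r addr0 /= normrM; apply: ler_wpM2r.
- exact: cvgP _ (series_lin (s:=B) (t:=0) hx hx).
Qed.

Lemma seq_inner_lin (u x1 x2 : R^nat) s t : bnd u -> in_l1 x1 -> in_l1 x2 ->
  seq_inner u (fun k => s * x1 k + t * x2 k) = s * seq_inner u x1 + t * seq_inner u x2.
Proof.
move=> hu h1 h2; rewrite /seq_inner; apply: cvg_lim => //.
have -> : (fun k => u k * (s * x1 k + t * x2 k)) =
          (fun k => s * (u k * x1 k) + t * (u k * x2 k)) by apply: funext => k; ring.
apply: series_lin; exact: abs_cvg.
Qed.

Lemma l1_lin (x1 x2 : R^nat) (s t : R) : in_l1 x1 -> in_l1 x2 -> in_l1 (fun k => s * x1 k + t * x2 k).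
Proof.
move=> h1 h2; rewrite /in_l1.
apply: (@series_le_cvg _ _ (fun k => `|s| * `|x1 k| + `|t| * `|x2 k|)).
- by move=> n.
- by move=> n; rewrite addr_ge0 // mulr_ge0.
- by move=> n; apply: le_trans (ler_normD _ _) _; rewrite !normrM.
- exact: cvgP _ (series_lin (s:=`|s|) (t:=`|t|) h1 h2).
Qed.

Lemma l1norm_conv (x1 x2 : R^nat) (t : R) : 0 <= t -> t <= 1 -> in_l1 x1 -> in_l1 x2 ->
  l1norm (fun k => t * x1 k + (1 - t) * x2 k) <= t * l1norm x1 + (1 - t) * l1norm x2.
Proof.
move=> t0 t1 h1 h2; rewrite /l1norm.
have h := series_lin (s:=t) (t:=1 - t) h1 h2.
rewrite -(cvg_lim _ h) //; apply: ler_lim.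
- exact: l1_lin.
- exact: cvgP _ h.
- apply: nearW => n; rewrite /series /=; apply: ler_sum => k _.
  apply: le_trans (ler_normD _ _) _; rewrite !normrM !(ger0_norm t0) (@ger0_norm _ (1 - t)); last lra. done.
Qed.

Definition dlt (k : nat) (a : R) : R^nat := fun j => if j == k then a else 0.

Lemma series_dlt k (a : R) : series (dlt k a) @ \oo --> a.
Proof.
apply: cvg_near_cst; exists k.+1 => // n /= hn.
rewrite /series /= big_mkord (bigD1 (Ordinal hn)) //= /dlt eqxx big1 ?addr0 // => j hj.
rewrite ifF //; apply: contraNF hj => /eqP hjk; apply/eqP/val_inj => /=; exact: hjk.
Qed.

Lemma l1_mod (x : R^nat) k (a : R) : in_l1 x -> in_l1 (fun j => x j + dlt k a j) /\
  l1norm (fun j => x j + dlt k a j) = l1norm x - `|x k| + `|x k + a|.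
Proof.
move=> hx.
have E : (fun j => `|x j + dlt k a j|) =
         (fun j => 1 * `|x j| + 1 * dlt k (`|x k + a| - `|x k|) j).
  apply: funext => j; rewrite /dlt; case: eqP => [->|_]; rewrite ?mul1r ?addr0 //; ring.
have := series_lin (s:=1) (t:=1) hx (@series_dlt k (`|x k + a| - `|x k|)); rewrite -E => h.
split; first exact: cvgP _ h.
rewrite /l1norm (cvg_lim _ h) //; rewrite -/(l1norm x); ring.
Qed.

Lemma inner_mod (u x : R^nat) k (a : R) : bnd u -> in_l1 x ->
  seq_inner u (fun j => x j + dlt k a j) = seq_inner u x + a * u k.
Proof.
move=> hu hx.
have E : (fun j => u j * (x j + dlt k a j)) =
         (fun j => 1 * (u j * x j) + 1 * dlt k (a * u k) j).
  apply: funext => j; rewrite /dlt; case: eqP => [->|_]; rewrite ?mulr0 ?addr0 ?mul1r //; ring.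
have := series_lin (s:=1) (t:=1) (abs_cvg hu hx) (@series_dlt k (a * u k)); rewrite -E => h.
rewrite /seq_inner (cvg_lim _ h) //; ring.
Qed.

Lemma vinner_L (m : nat) (us : 'I_m -> R^nat) (c : 'I_m -> R) (x : R^nat) :
  (forall j, bnd (us j)) -> in_l1 x -> vinner c (Lop us x) = seq_inner (Ladj us c) x.
Proof.
move=> hb hx; rewrite /seq_inner; apply/esym/cvg_lim => //.
have -> : series (fun k => Ladj us c k * x k) =
    (fun n => \sum_(j < m) c j * series (fun k => us j k * x k) n).
  apply: funext => n; rewrite /series /Ladj /=.
  under eq_bigr do rewrite mulr_suml.
  rewrite exchange_big /=; apply: eq_bigr => j _; rewrite mulr_sumr.
  by apply: eq_bigr => k _; ring.
rewrite /vinner /Lop; apply: cvg_sum_list => j.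
apply: cvgMl_tmp; exact: abs_cvg.
Qed.

Lemma Ladj_c0 (m : nat) (us : 'I_m -> R^nat) (c : 'I_m -> R) :
  (forall j, in_c0 (us j)) -> in_c0 (Ladj us c).
Proof.
move=> hu; rewrite /in_c0 /Ladj.
have h := @cvg_sum_list _ (index_enum (ordinal m)) (fun _ => true)
  (fun j n => c j * us j n) (fun j => c j * 0) (fun j => cvgMl_tmp (hu j)).
by rewrite big1 in h => [|j _]; [exact: h|rewrite mulr0].
Qed.

Lemma fin_argmax (f : nat -> R) N : exists j, (j <= N)%N /\ forall n, (n <= N)%N -> f n <= f j.
Proof.
elim: N => [|N [j [hj IH]]].
  by exists 0%N; split => // n; rewrite leqn0 => /eqP ->.
case: (lerP (f j) (f N.+1)) => h.
  exists N.+1; split => // n; rewrite leq_eqVlt => /orP [/eqP -> //|hn].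
  exact: le_trans (IH n hn) h.
exists j; split; first exact: leqW.
move=> n; rewrite leq_eqVlt => /orP [/eqP -> |hn]; [exact: ltW|exact: IH].
Qed.

Lemma c0_max (v : R^nat) : in_c0 v -> exists j, forall n, `|v n| <= `|v j|.
Proof.
move=> hv; case: (pselect (forall n, v n = 0)) => [h0|].
  by exists 0%N => n; rewrite !h0.
move=> /existsNP [p hp].
have hp' : 0 < `|v p| by rewrite normr_gt0; apply/eqP.
have [N _ hN] := cvgr0_norm_lt _ hv _ hp'.
have [j [hj hmax]] := fin_argmax (fun n => `|v n|) N.
exists j => n.
have hpN : (p <= N)%N.
  rewrite leqNgt; apply/negP => hpn; have := hN p (ltnW hpn); rewrite /= ltxx //.
case: (leqP n N) => hn; first exact: hmax.
apply: le_trans (ltW (hN n (ltnW hn))) (hmax p hpN).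
Qed.

Lemma sup_attained (v : R^nat) j : (forall n, `|v n| <= `|v j|) -> supnorm v = `|v j|.
Proof.
move=> h; rewrite /supnorm; apply/eqP; rewrite eq_le; apply/andP; split.
  by apply: ge_sup; [exists `|v j|; exists j|move=> r [n _ <-]; exact: h].
apply: ub_le_sup; last by exists j.
by exists `|v j| => r [n _ <-]; exact: h.
Qed.

Lemma comb_ge0 (v x : R^nat) (lam : R) : bnd v -> in_l1 x ->
  (forall k, 0 <= lam * `|x k| + v k * x k) -> 0 <= lam * l1norm x + seq_inner v x.
Proof.
move=> hv hx h.
have hs := series_lin (s:=lam) (t:=1) hx (abs_cvg hv hx).
have e := cvg_lim hsR hs; rewrite mul1r in e.
rewrite /l1norm /seq_inner -e; apply: limr_ge; first exact: cvgP _ hs.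
apply: nearW => n; rewrite /series /=; apply: sumr_ge0 => k _; rewrite mul1r; exact: h.
Qed.

Lemma comb_eq0 (v x : R^nat) (lam : R) : bnd v -> in_l1 x ->
  (forall k, lam * `|x k| + v k * x k = 0) -> lam * l1norm x + seq_inner v x = 0.
Proof.
move=> hv hx h.
have hs := series_lin (s:=lam) (t:=1) hx (abs_cvg hv hx).
have e := cvg_lim hsR hs; rewrite mul1r in e.
rewrite /l1norm /seq_inner -e.
have -> : series (fun k => lam * `|x k| + 1 * (v k * x k)) = (fun _ => 0).
  by apply: funext => n; rewrite /series /= big1 // => k _; rewrite mul1r h.
exact: lim_cst.
Qed.

End Ser.
Section Soft.
Variable R : realType.

Lemma soft_fix (a w : R) :
  a = Num.max (`|a + w| - 1) 0 * Num.sg (a + w) <->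
  ((a != 0 -> w = Num.sg a) /\ (a = 0 -> `|w| <= 1)).
Proof.
split.
- move=> h.
  have [bneg|bpos|b0] := ltrgtP (a + w) 0.
  + rewrite ltr0_sg // ltr0_norm // in h.
    case: (lerP (- (a + w) - 1) 0) => hm.
      rewrite max_r // mul0r in h; subst a; split => //; first by rewrite eqxx.
      move=> _; rewrite add0r in bneg hm; rewrite ltr0_norm //; lra.
    rewrite max_l ?ltW // in h.
    have ha : a < 0 by lra.
    split; last by move=> h0; lra.
    move=> _; rewrite ltr0_sg //; lra.
  + rewrite gtr0_sg // gtr0_norm // mulr1 in h.
    case: (lerP (a + w - 1) 0) => hm.
      rewrite max_r // in h; subst a; split => //; first by rewrite eqxx.
      move=> _; rewrite add0r in bpos hm; rewrite gtr0_norm //; lra.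
    rewrite max_l ?ltW // in h.
    have ha : 0 < a by lra.
    split; last by move=> h0; lra.
    move=> _; rewrite gtr0_sg //; lra.
  + rewrite b0 sgr0 mulr0 in h; subst a; split; first by rewrite eqxx.
    move=> _; rewrite add0r in b0; rewrite b0 normr0; lra.
- move=> [h1 h2].
  have [aneg|apos|a0] := ltrgtP a 0.
  + have hw := h1 (ltr0_neq0 aneg); rewrite ltr0_sg // in hw; subst w.
    rewrite ltr0_sg ?ltr0_norm; try lra.
    rewrite max_l; lra.
  + have hw := h1 (lt0r_neq0 apos); rewrite gtr0_sg // in hw; subst w.
    rewrite gtr0_sg ?gtr0_norm; try lra.
    rewrite max_l; lra.
  + subst a; have := h2 erefl; rewrite add0r => hw.
    by rewrite max_r ?mul0r //; lra.
Qed.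

Lemma lim_small (A B K : R) : 0 <= K ->
  (forall t, 0 < t -> t <= 1 -> A <= B + t * K) -> A <= B.
Proof.
move=> K0 h; apply/ler_addgt0Pr => e e0.
pose t := e / (e + K + 1).
have d0 : 0 < e + K + 1 by lra.
have t0 : 0 < t by rewrite /t divr_gt0.
have t1 : t <= 1 by rewrite /t ler_pdivrMr // mul1r; lra.
have tK : t * K <= e by rewrite /t mulrAC ler_pdivrMr //; nra.
have := h t t0 t1; lra.
Qed.

End Soft.
End Helpers.
Import Helpers.

Theorem mainTheorem20 (R : realType) (m : nat) (us : 'I_m -> R^nat)
  (hus : forall j, in_c0 (us j))
  (Q : ('I_m -> R) -> R) (hQpos : forall a, 0 <= Q a) (hQconv : convex_fun Q)
  (lam : R) (hlam : 0 < lam) (x0 : R^nat) (hx0 : in_l1 x0) :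
  is_solution us Q lam x0 <->
  exists chat : 'I_m -> R,
    is_prox (conjugate Q) (fun j => chat j + Lop us x0 j) chat /\
    x0 = prox_l1 (fun k => x0 k - lam^-1 * trunc (Ladj us chat) k).
Proof.
have hb : forall j, bnd (us j) := fun j => c0_bnd (hus j).
have vsub : forall (c a b : 'I_m -> R), vinner c (fun j => a j - b j) = vinner c a - vinner c b.
  by move=> c a b; rewrite /vinner -sumrB; apply: eq_bigr => j _; ring.
have vsym : forall (a c : 'I_m -> R), vinner a c = vinner c a.
  by move=> a c; rewrite /vinner; apply: eq_bigr => j _; rewrite mulrC.
have Qsub : forall y, exists c, forall a, vinner c (fun j => a j - y j) <= Q a - Q y.
  move=> y.
  have : exists c, forall z (x : unit), True -> vinner c z <= Q (fun j => y j + z j) - Q y.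
    apply: (subgrad_exists (mix := fun _ _ _ => tt)) => //.
    - move=> t z1 z2 _ _ t0 t1 _ _.
      have := hQconv (fun j => y j + z1 j) (fun j => y j + z2 j) t t0 t1.
      have -> : (fun j => y j + (t * z1 j + (1 - t) * z2 j)) =
        (fun j => t * (y j + z1 j) + (1 - t) * (y j + z2 j)) by apply: funext => j; ring.
      lra.
    - move=> _ _; have -> : (fun j => y j + 0) = y by apply: funext => j; rewrite addr0.
      by rewrite subrr.
  move=> [c hc]; exists c => a; have := hc (fun j => a j - y j) tt I.
  by have -> : (fun j => y j + (a j - y j)) = a by apply: funext => j; ring.
split.
- move=> [_ hsol].
  have : exists c, forall z x, in_l1 x -> vinner c z <=
      Q (fun j => Lop us x j + z j) + lam * l1norm x - (Q (Lop us x0) + lam * l1norm x0).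
    apply: (subgrad_exists (mix := fun t x1 x2 k => t * x1 k + (1 - t) * x2 k)).
    - move=> t x1 x2 _ _; exact: l1_lin.
    - move=> t z1 z2 x1 x2 t0 t1 h1 h2.
      have hL : (fun j => Lop us (fun k => t * x1 k + (1 - t) * x2 k) j +
                   (t * z1 j + (1 - t) * z2 j)) =
                (fun j => t * (Lop us x1 j + z1 j) + (1 - t) * (Lop us x2 j + z2 j)).
        by apply: funext => j; rewrite /Lop seq_inner_lin //; ring.
      rewrite hL.
      have hq := hQconv (fun j => Lop us x1 j + z1 j) (fun j => Lop us x2 j + z2 j) t t0 t1.
      have hn := l1norm_conv t0 t1 h1 h2.
      have hn' := ler_wpM2l (ltW hlam) hn.
      lra.
    - move=> x hx; have -> : (fun j => Lop us x j + 0) = Lop us x by apply: funext => j; rewrite addr0.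
      have := hsol x hx; lra.
    - by exists x0.
  move=> [c hc].
  have hsubQ : forall a, vinner c (fun j => a j - Lop us x0 j) <= Q a - Q (Lop us x0).
    move=> a; have := hc (fun j => a j - Lop us x0 j) x0 hx0.
    have -> : (fun j => Lop us x0 j + (a j - Lop us x0 j)) = a by apply: funext => j; ring.
    lra.
  have hopt : forall x, in_l1 x -> lam * l1norm x0 + seq_inner (Ladj us c) x0 <=
      lam * l1norm x + seq_inner (Ladj us c) x.
    move=> x hx; have := hc (fun j => Lop us x0 j - Lop us x j) x hx.
    have -> : (fun j => Lop us x j + (Lop us x0 j - Lop us x j)) = Lop us x0
      by apply: funext => j; ring.
    rewrite vsub (vinner_L c hb hx) (vinner_L c hb hx0); lra.
  have hv : bnd (Ladj us c) := c0_bnd (Ladj_c0 c hus).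
  have hcoord : forall k t, 0 <= lam * (`|x0 k + t| - `|x0 k|) + t * Ladj us c k.
    move=> k t; have [hl1 hln] := l1_mod k t hx0.
    have := hopt _ hl1; rewrite hln (inner_mod k t hv hx0); lra.
  have hvle : forall k, `|Ladj us c k| <= lam.
    move=> k; have h2 := hcoord k (- Ladj us c k).
    have h1 := ler_normB (x0 k) (Ladj us c k).
    have hsq : Ladj us c k * Ladj us c k = `|Ladj us c k| * `|Ladj us c k|.
      by rewrite -normrM ger0_norm // -expr2 sqr_ge0.
    have hn0 := normr_ge0 (Ladj us c k).
    nra.
  have hsgn : forall k, x0 k != 0 -> Ladj us c k = - lam * Num.sg (x0 k).
    move=> k hk; have h1 := hcoord k (x0 k); have h2 := hcoord k (- x0 k).
    rewrite subrr normr0 in h2.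
    have e2 : x0 k + x0 k = 2 * x0 k by ring.
    rewrite e2 normrM (@ger0_norm _ 2) // in h1.
    have [neg|pos|z] := ltrgtP (x0 k) 0.
    + rewrite ltr0_sg // ltr0_norm // in h1 h2 *.
      apply/eqP; rewrite eq_le; apply/andP; split; nra.
    + rewrite gtr0_sg // gtr0_norm // in h1 h2 *.
      apply/eqP; rewrite eq_le; apply/andP; split; nra.
    + by rewrite z eqxx in hk.
  exists c; split.
  + move=> d /=.
    have hcc : (conjugate Q c <= (vinner (Lop us x0) c - Q (Lop us x0))%:E)%E.
      apply: ge_ereal_sup => _ [a _ <-]; rewrite lee_fin.
      have := hsubQ a; rewrite vsub (vsym a c) (vsym (Lop us x0) c); lra.
    have hcd : ((vinner (Lop us x0) d - Q (Lop us x0))%:E <= conjugate Q d)%E.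
      by apply: ereal_sup_ubound; exists (Lop us x0).
    have key : 2^-1 * vnorm2 (fun j => c j + Lop us x0 j - c j) + (vinner (Lop us x0) c - Q (Lop us x0))
        <= 2^-1 * vnorm2 (fun j => c j + Lop us x0 j - d j) + (vinner (Lop us x0) d - Q (Lop us x0)).
      have E : 2^-1 * vnorm2 (fun j => c j + Lop us x0 j - d j) + vinner (Lop us x0) d =
          2^-1 * vnorm2 (fun j => c j + Lop us x0 j - c j) + vinner (Lop us x0) c +
          \sum_(j < m) 2^-1 * (c j - d j) ^+ 2.
        rewrite /vnorm2 /vinner !mulr_sumr -!big_split /=; apply: eq_bigr => j _.
        by rewrite !expr2; field.
      have : 0 <= \sum_(j < m) 2^-1 * (c j - d j) ^+ 2.
        by apply: sumr_ge0 => j _; rewrite mulr_ge0 // ?invr_ge0 ?sqr_ge0.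
      lra.
    apply: (le_trans (leeD (lexx _) hcc)); rewrite -EFinD.
    apply: (le_trans _ (leeD (lexx _) hcd)); rewrite -EFinD lee_fin; exact: key.
  + apply: funext => k; rewrite /prox_l1.
    apply/(soft_fix (x0 k) (- (lam^-1 * trunc (Ladj us c) k))).
    have hM : supnorm (Ladj us c) <= lam.
      apply: ge_sup; first by exists `|Ladj us c 0|; exists 0%N.
      by move=> r [n _ <-]; exact: hvle.
    have hub : forall n, `|Ladj us c n| <= supnorm (Ladj us c).
      move=> n; apply: ub_le_sup; last by exists n.
      by exists lam => r [j _ <-]; exact: hvle.
    split.
    * move=> hk; have hs := hsgn k hk.
      have hnorm : `|Ladj us c k| = lam.
        by rewrite hs normrM normrN (gtr0_norm hlam) normr_sg hk mulr1.
      have htr : trunc (Ladj us c) k = Ladj us c k.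
        rewrite /trunc; have -> // : `|Ladj us c k| == supnorm (Ladj us c).
        by apply/eqP/le_anti; rewrite hub /= hnorm hM.
      rewrite htr hs mulNr mulrN opprK mulrA mulVf ?mul1r //; exact: lt0r_neq0.
    * have il : 0 < lam^-1 by rewrite invr_gt0.
      move=> _; rewrite normrN normrM (ger0_norm (ltW il)).
      have hT : `|trunc (Ladj us c) k| <= lam.
        apply: le_trans (hvle k); rewrite /trunc; case: ifP => _ //.
        by rewrite normr0 normr_ge0.
      have := ler_wpM2l (ltW il) hT; rewrite mulVf //; exact: lt0r_neq0.
- move=> [c [hprox hfix]]; split => // x hx.
  have [c0 hc0] := Qsub (Lop us x0).
  have hub_c : forall a, ((vinner a c - Q a)%:E <= conjugate Q c)%E.
    by move=> a; apply: ereal_sup_ubound; exists a.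
  pose q0 := vinner (Lop us x0) c0 - Q (Lop us x0).
  have hc0c : forall a, vinner a c0 - Q a <= q0.
    by move=> a; have := hc0 a; rewrite vsub (vsym a c0) /q0 (vsym (Lop us x0) c0); lra.
  have hq_up : (conjugate Q c0 <= q0%:E)%E.
    by apply: ge_ereal_sup => _ [a _ <-]; rewrite lee_fin; exact: hc0c.
  have hp0 := hprox c0; rewrite /= in hp0.
  have [q hq] : exists q, conjugate Q c = q%:E.
    move: (hub_c (fun _ => 0)) hp0.
    case: (conjugate Q c) => [r| |]; first by exists r.
      move=> _ hp0; exfalso; have := le_trans hp0 (leeD (lexx _) hq_up).
      by rewrite -EFinD.
    by [].
  have hsubc : forall a, vinner c (fun j => a j - Lop us x0 j) <= Q a - Q (Lop us x0).
    have hqle : q <= vinner (Lop us x0) c - Q (Lop us x0).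
      pose e := fun j => c0 j - c j.
      pose K := 2^-1 * vnorm2 e.
      have K0 : 0 <= K.
        by rewrite /K mulr_ge0 ?invr_ge0 // /vnorm2 sumr_ge0 // => j _; rewrite sqr_ge0.
      suff : q <= q0 - vinner (Lop us x0) e.
        by rewrite /e vsub /q0; lra.
      apply: (lim_small K0) => t t0 t1.
      pose d := fun j => (1 - t) * c j + t * c0 j.
      have hcd : (conjugate Q d <= ((1 - t) * q + t * q0)%:E)%E.
        apply: ge_ereal_sup => _ [a _ <-]; rewrite lee_fin /d vinner_lin.
        have hA : vinner a c - Q a <= q by rewrite -lee_fin -hq.
        have h1 := ler_wpM2l (_ : 0 <= 1 - t) hA.
        have h2 := ler_wpM2l (ltW t0) (hc0c a).
        have := h1 ltac:(lra); lra.
      have hp := hprox d; rewrite /= hq in hp.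
      have := le_trans hp (leeD (lexx _) hcd); rewrite -!EFinD lee_fin => hr.
      have E : 2^-1 * vnorm2 (fun j => c j + Lop us x0 j - d j) =
        2^-1 * vnorm2 (fun j => c j + Lop us x0 j - c j) - t * vinner (Lop us x0) e + t * (t * K).
        rewrite /K /vnorm2 /vinner /e /d !mulr_sumr -sumrB -big_split /=.
        by apply: eq_bigr => j _; rewrite !expr2; field.
      rewrite E in hr.
      have : t * (q - (q0 - vinner (Lop us x0) e)) <= t * (t * K) by lra.
      by rewrite ler_pM2l //; lra.
    move=> a; have := hub_c a; rewrite hq lee_fin vsub (vsym a c); rewrite (vsym (Lop us x0) c) in hqle; lra.
  have hvc0 : in_c0 (Ladj us c) := Ladj_c0 c hus.
  have hv : bnd (Ladj us c) := c0_bnd hvc0.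
  have hfk : forall k, (x0 k != 0 -> - (lam^-1 * trunc (Ladj us c) k) = Num.sg (x0 k)) /\
      (x0 k = 0 -> `|- (lam^-1 * trunc (Ladj us c) k)| <= 1).
    move=> k; apply/soft_fix; exact: (congr1 (fun f => f k) hfix).
  have il : 0 < lam^-1 by rewrite invr_gt0.
  have hT : forall k, `|trunc (Ladj us c) k| <= lam.
    move=> k; have [h1 h2] := hfk k.
    have hw : `|- (lam^-1 * trunc (Ladj us c) k)| <= 1.
      case: (eqVneq (x0 k) 0) => hk; first exact: h2.
      by rewrite h1 // normr_sg hk.
    move: hw; rewrite normrN normrM (ger0_norm (ltW il)) => hw.
    have := ler_wpM2l (ltW hlam) hw; rewrite mulrA mulfV ?mul1r ?mulr1 //; exact: lt0r_neq0.
  have [j hj] := c0_max hvc0.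
  have hsup := sup_attained hj.
  have hvle : forall n, `|Ladj us c n| <= lam.
    move=> n; apply: le_trans (hj n) _; have := hT j; by rewrite /trunc hsup eqxx.
  have hterm0 : forall k, lam * `|x0 k| + Ladj us c k * x0 k = 0.
    move=> k; case: (eqVneq (x0 k) 0) => hk; first by rewrite hk normr0 !mulr0 addr0.
    have hs := (hfk k).1 hk.
    have htr0 : trunc (Ladj us c) k != 0.
      apply/eqP => h0; move: hs; rewrite h0 mulr0 oppr0 => /esym/eqP.
      by rewrite sgr_eq0; apply/negP.
    have hTv : trunc (Ladj us c) k = Ladj us c k.
      by move: htr0; rewrite /trunc; case: ifP => //; rewrite eqxx.
    rewrite hTv in hs.
    have hvk : Ladj us c k = - (lam * Num.sg (x0 k)).
      rewrite -hs mulrN opprK mulrA mulfV ?mul1r //; exact: lt0r_neq0.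
    rewrite hvk (normrEsg (x0 k)); ring.
  have hge : forall k, 0 <= lam * `|x k| + Ladj us c k * x k.
    move=> k; have := ler_norm (- (Ladj us c k * x k)); rewrite normrN normrM => h1.
    have h2 := ler_wpM2r (normr_ge0 (x k)) (hvle k).
    lra.
  have Lx := comb_ge0 hv hx hge.
  have Lx0 := comb_eq0 hv hx0 hterm0.
  have hq1 := hsubc (Lop us x).
  rewrite vsub (vinner_L c hb hx) (vinner_L c hb hx0) in hq1.
  lra.
Qed.
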